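(* Let $P$ be a property that is a necessary condition for the existence of a perfect factor, i.e. for every $(G',f')\in\mathcal C$ such that $G'$ has a perfect $f'$-factor we have $P(G',f')$. Let $\kappa$ be an infinite cardinal and $(G,f)\in\mathcal C$ with $|V(G)|=\kappa^+$. If $G$ possesses a perfect $f$-factor, then $(G,f)$ is not $P$-destructed.
   Context: A graph is $G=(V,E)$ with $V$ a nonempty set and $E\subseteq\{e\subseteq V:|e|=2\}$. For $F\subseteq E$ and $x\in V$, $d_F(x)$ is the cardinal $|\{e\in F:x\in e\}|$. For $f:V\to$ Cardinals, an $f$-factor of $G$ is $F\subseteq E$ with $d_F(x)\le f(x)$ for all $x$; it is perfect if $d_F(x)=f(x)$ for all $x$; $f^{-1}(\lambda)=\{x\in V:f(x)=\lambda\}$. $\mathcal C$ is the class of all pairs $(G,f)$ with $G=(V,E)$ a graph, $f:V\to$ Cardinals, and $f(x)\le d_E(x)$ for all $x\in V$. A property $P$ is a class of pairs; $P(G,f)$ (also ''$(G,f)$ fulfills $P$'') means that $(G,f)\in\mathcal C$ and $(G,f)$ has property $P$. Destructions: let $(G,f)\in\mathcal C$, $G=(V,E)$, $|V|=\kappa^+$ for an infinite cardinal $\kappa$. Let $(A_\alpha)_{\alpha<\kappa^+}$ be an increasing continuous sequence (i.e. $A_\lambda=\bigcup_{\alpha<\lambda}A_\alpha$ for limit $\lambda$) of subsets of $V$ with $|A_\alpha|<\kappa^+$ for all $\alpha$ and $V=\bigcup_{\alpha<\kappa^+}A_\alpha$. For $\alpha<\kappa^+$ put $V_\alpha=(V\setminus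 A_\alpha)\cup f^{-1}(\kappa^+)$, $E_\alpha=\{\{x,y\}\in E: x\in V_\alpha,\ y\in V\setminus A_\alpha\}$, $G_\alpha=(V_\alpha,E_\alpha)$, $f_\alpha=f\restriction V_\alpha$. For a property $P$, $(A_\alpha)_{\alpha<\kappa^+}$ is a $P$-destruction of $(G,f)$ if $S=\{\alpha<\kappa^+: P(G_\alpha,f_\alpha)\text{ fails}\}$ is stationary in $\kappa^+$; $(G,f)$ is $P$-destructed if some such sequence is a $P$-destruction of $(G,f)$. *)

(* Defs.v *)
(* plain Rocq, cardinals represented by types. *)

Definition card_le (A B : Type) : Prop :=
  exists g : A -> B, forall a a', g a = g a' -> a = a'.
Definition card_eq (A B : Type) : Prop :=
  exists g : A -> B, (forall a a', g a = g a' -> a = a') /\ (forall b, exists a, g a = b).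
Definition card_lt (A B : Type) : Prop := card_le A B /\ ~ card_le B A.

Definition is_graph (V : Type) (E : V -> V -> Prop) : Prop :=
  inhabited V /\ (forall x y, E x y -> E y x) /\ (forall x, ~ E x x).

(* d_F(x) is the cardinality of the type of F-neighbours of x *)
Definition deg {V : Type} (F : V -> V -> Prop) (x : V) : Type := {y : V | F x y}.

Definition in_C (V : Type) (E : V -> V -> Prop) (f : V -> Type) : Prop :=
  is_graph V E /\ forall x, card_le (f x) (deg E x).

Definition perfect_factor (V : Type) (E : V -> V -> Prop) (f : V -> Type)
  (F : V -> V -> Prop) : Prop :=
  (forall x y, F x y -> E x y) /\ (forall x y, F x y -> F y x) /\
  (forall x, card_eq (deg F x) (f x)).

Definition has_perfect_factor (V : Type) (E : V -> V -> Prop) (f : V -> Type) : Prop :=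
  exists F, perfect_factor V E f F.

Definition property : Type :=
  forall V : Type, (V -> V -> Prop) -> (V -> Type) -> Prop.

(* "P(G,f)": (G,f) in C and has property P *)
Definition fulfills (P : property) (V : Type) (E : V -> V -> Prop) (f : V -> Type) : Prop :=
  in_C V E f /\ P V E f.

Definition is_limit {O : Type} (lt : O -> O -> Prop) (l : O) : Prop :=
  (exists a, lt a l) /\ (forall a, lt a l -> exists b, lt a b /\ lt b l).

(* (O, lt) is a well-order of order type kappa^+, where kappa = |K| is infinite:
   every proper initial segment has cardinality <= kappa, and O itself does not. *)
Definition is_succ_card (K : Type) (O : Type) (lt : O -> O -> Prop) : Prop :=
  card_le nat K /\
  well_founded lt /\
  (forall a b c, lt a b -> lt b c -> lt a c) /\
  (forall a b, lt a b \/ a = b \/ lt b a) /\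
  (forall a, card_le {b : O | lt b a} K) /\
  ~ card_le O K.

Definition club {O : Type} (lt : O -> O -> Prop) (C : O -> Prop) : Prop :=
  (forall a, exists b, C b /\ (lt a b \/ a = b)) /\
  (forall l, is_limit lt l ->
     (forall a, lt a l -> exists b, C b /\ (lt a b \/ a = b) /\ lt b l) -> C l).

Definition stationary {O : Type} (lt : O -> O -> Prop) (S : O -> Prop) : Prop :=
  forall C, club lt C -> exists a, S a /\ C a.

Definition destruction_seq (V : Type) (O : Type) (lt : O -> O -> Prop)
  (A : O -> V -> Prop) : Prop :=
  (forall a b, lt a b -> forall x, A a x -> A b x) /\
  (forall l, is_limit lt l -> forall x, A l x <-> exists a, lt a l /\ A a x) /\
  (forall a, card_lt {x : V | A a x} O) /\
  (forall x, exists a, A a x).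

(* V_alpha = (V \ A_alpha) u f^{-1}(kappa^+) *)
Definition V_al {V : Type} {O : Type} (f : V -> Type) (A : O -> V -> Prop) (a : O)
  (x : V) : Prop := ~ A a x \/ card_eq (f x) O.

Definition Vt_al {V : Type} {O : Type} (f : V -> Type) (A : O -> V -> Prop) (a : O) : Type :=
  {x : V | V_al f A a x}.

(* E_alpha = { {x,y} in E : x in V_alpha, y in V \ A_alpha } *)
Definition E_al {V : Type} {O : Type} (E : V -> V -> Prop) (f : V -> Type)
  (A : O -> V -> Prop) (a : O) (u v : Vt_al f A a) : Prop :=
  E (proj1_sig u) (proj1_sig v) /\
  ((V_al f A a (proj1_sig u) /\ ~ A a (proj1_sig v)) \/
   (V_al f A a (proj1_sig v) /\ ~ A a (proj1_sig u))).

Definition f_al {V : Type} {O : Type} (f : V -> Type) (A : O -> V -> Prop) (a : O)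
  (u : Vt_al f A a) : Type := f (proj1_sig u).

Definition is_P_destruction (P : property) (V : Type) (E : V -> V -> Prop) (f : V -> Type)
  (O : Type) (lt : O -> O -> Prop) (A : O -> V -> Prop) : Prop :=
  destruction_seq V O lt A /\
  stationary lt (fun a => ~ fulfills P (Vt_al f A a) (E_al E f A a) (f_al f A a)).

Definition P_destructed (P : property) (V : Type) (E : V -> V -> Prop) (f : V -> Type)
  (O : Type) (lt : O -> O -> Prop) : Prop :=
  exists A, is_P_destruction P V E f O lt A.

(* Main.v *)
Require Import Defs.
From Stdlib Require Import Classical ClassicalEpsilon ProofIrrelevance Cantor.
From mathcomp Require classical_sets.

Lemma zorn_sets (T:Type) (P : (T->Prop)->Prop) :
  (forall F : (T->Prop)->Prop, (forall X, F X -> P X) ->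
     (forall X Y, F X -> F Y -> (forall t, X t -> Y t) \/ (forall t, Y t -> X t)) ->
     P (fun t => exists2 X, F X & X t)) ->
  exists A, P A /\ forall B, (forall t, A t -> B t) -> ~ (forall t, B t -> A t) -> ~ P B.
Proof.
  intros H.
  destruct (@classical_sets.Zorn_bigcup T P) as [A [HA HB]].
  - intros F HF Ht. exact (H F HF Ht).
  - exists A; split; [exact HA|]. intros B h1 h2. apply HB. split; assumption.
Qed.

Lemma cle_refl A : card_le A A.
Proof. exists (fun a => a); auto. Qed.

Lemma cle_trans A B C : card_le A B -> card_le B C -> card_le A C.
Proof. intros [f hf] [g hg]. exists (fun a => g (f a)); auto. Qed.

Lemma ceq_cle A B : card_eq A B -> card_le A B.
Proof. intros [f [hf _]]; exists f; auto. Qed.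

Lemma ceq_cle_rev A B : card_eq A B -> card_le B A.
Proof.
  intros [f [hf hs]].
  exists (fun b => proj1_sig (constructive_indefinite_description _ (hs b))).
  intros b b' e.
  destruct (constructive_indefinite_description _ (hs b)) as [x hx].
  destruct (constructive_indefinite_description _ (hs b')) as [x' hx'].
  simpl in e; subst; reflexivity.
Qed.

Lemma ceq_refl A : card_eq A A.
Proof. exists (fun a => a); split; eauto. Qed.

Lemma ceq_trans A B C : card_eq A B -> card_eq B C -> card_eq A C.
Proof.
  intros [f [hf sf]] [g [hg sg]]. exists (fun a => g (f a)); split; auto.
  intros c. destruct (sg c) as [b <-]. destruct (sf b) as [a <-]. eauto.
Qed.

Section SB.
Variables (X Y : Type) (f : X -> Y) (g : Y -> X).
Hypothesis (hf : forall a a', f a = f a' -> a = a') (hg : forall a a', g a = g a' -> a = a').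

Fixpoint Cn (n : nat) (x : X) : Prop :=
  match n with
  | O => ~ exists y, g y = x
  | S n => exists x', Cn n x' /\ x = g (f x')
  end.
Definition Cs x := exists n, Cn n x.

Lemma notC_ex x : ~ Cs x -> exists y, g y = x.
Proof.
  intros h. apply NNPP; intro h2. apply h. exists O. exact h2.
Qed.

Definition hSB (x : X) : Y :=
  match excluded_middle_informative (Cs x) with
  | left _ => f x
  | right n => proj1_sig (constructive_indefinite_description _ (notC_ex x n))
  end.

Lemma hSB_C x : Cs x -> hSB x = f x.
Proof. intro c. unfold hSB. destruct (excluded_middle_informative (Cs x)) as [h|h]; [reflexivity | contradiction]. Qed.

Lemma hSB_nC x : ~ Cs x -> g (hSB x) = x.
Proof.
  intro c. unfold hSB. destruct (excluded_middle_informative (Cs x)) as [h|h]; [contradiction|].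
  destruct (constructive_indefinite_description _ _); simpl; auto.
Qed.

Lemma hSB_bij : (forall a a', hSB a = hSB a' -> a = a') /\ (forall b, exists a, hSB a = b).
Proof.
  split.
  - intros a b e.
    destruct (classic (Cs a)) as [ca|ca]; destruct (classic (Cs b)) as [cb|cb].
    + rewrite (hSB_C a ca), (hSB_C b cb) in e. auto.
    + exfalso. apply cb. destruct ca as [n hn]. exists (S n). exists a. split; auto.
      rewrite <- (hSB_nC b cb), <- e, (hSB_C a (ex_intro _ n hn)). reflexivity.
    + exfalso. apply ca. destruct cb as [n hn]. exists (S n). exists b. split; auto.
      rewrite <- (hSB_nC a ca), e, (hSB_C b (ex_intro _ n hn)). reflexivity.
    + rewrite <- (hSB_nC a ca), <- (hSB_nC b cb), e. reflexivity.
  - intro y. destruct (classic (Cs (g y))) as [c|c].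
    + destruct c as [[|n] hn].
      * exfalso. apply hn. eauto.
      * destruct hn as [x' [h1 h2]]. exists x'.
        rewrite (hSB_C x' (ex_intro _ n h1)). apply hg in h2. auto.
    + exists (g y). apply hg. apply hSB_nC. exact c.
Qed.
End SB.

Lemma SB A B : card_le A B -> card_le B A -> card_eq A B.
Proof.
  intros [f hf] [g hg]. exists (hSB A B f g). apply hSB_bij; auto.
Qed.

Lemma ceq_sym A B : card_eq A B -> card_eq B A.
Proof. intro h. apply SB; [apply ceq_cle_rev | apply ceq_cle]; auto. Qed.

Lemma cle_prod A A' B B' : card_le A A' -> card_le B B' -> card_le (A*B) (A'*B').
Proof.
  intros [f hf] [g hg]. exists (fun p => (f (fst p), g (snd p))).
  intros [a b] [a' b'] e. injection e; intros. f_equal; auto.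
Qed.

Lemma cle_option K : card_le nat K -> card_le (option K) K.
Proof.
  intros [e he].
  pose (sh := fun k : K => match excluded_middle_informative (exists n, e n = k) with
                        | left H => e (S (proj1_sig (constructive_indefinite_description _ H)))
                        | right _ => k end).
  exists (fun o => match o with None => e O | Some k => sh k end).
  assert (shE : forall n, sh (e n) = e (S n)).
  { intro n. unfold sh. destruct (excluded_middle_informative _) as [H|H].
    - destruct (constructive_indefinite_description _ H) as [m hm]; simpl. apply he in hm. subst; auto.
    - exfalso; eauto. }
  assert (shN : forall k, ~ (exists n, e n = k) -> sh k = k).
  { intros k H. unfold sh. destruct (excluded_middle_informative _); tauto. }
  intros [a|] [b|] E.
  - f_equal.
    destruct (classic (exists n, e n = a)) as [[n <-]|na];
    destruct (classic (exists n, e n = b)) as [[m <-]|nb].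
    + rewrite !shE in E. apply he in E. injection E; intros; subst; auto.
    + rewrite shE, (shN b nb) in E. exfalso; eauto.
    + rewrite shE, (shN a na) in E. exfalso; eauto.
    + rewrite (shN a na), (shN b nb) in E. auto.
  - exfalso. destruct (classic (exists n, e n = a)) as [[n <-]|na].
    + rewrite shE in E. apply he in E. discriminate.
    + rewrite (shN a na) in E. eauto.
  - exfalso. destruct (classic (exists n, e n = b)) as [[n <-]|na].
    + rewrite shE in E. apply he in E. discriminate.
    + rewrite (shN b na) in E. eauto.
  - auto.
Qed.

Lemma comparability X Y : card_le X Y \/ card_le Y X.
Proof.
  pose (P := fun R : X*Y -> Prop =>
    (forall x y y', R (x,y) -> R (x,y') -> y = y') /\
    (forall x x' y, R (x,y) -> R (x',y) -> x = x')).
  destruct (zorn_sets (X*Y) P) as [A [[HA1 HA2] Hmax]].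
  - intros F HF Hch. split.
    + intros x y y' [R1 f1 r1] [R2 f2 r2].
      destruct (Hch R1 R2 f1 f2) as [s|s].
      * apply (proj1 (HF R2 f2) x); auto.
      * apply (proj1 (HF R1 f1) x); auto.
    + intros x x' y [R1 f1 r1] [R2 f2 r2].
      destruct (Hch R1 R2 f1 f2) as [s|s].
      * apply (proj2 (HF R2 f2) x x' y); auto.
      * apply (proj2 (HF R1 f1) x x' y); auto.
  - destruct (classic (forall x, exists y, A (x,y))) as [H|H].
    + left. exists (fun x => proj1_sig (constructive_indefinite_description _ (H x))).
      intros a a' e.
      destruct (constructive_indefinite_description _ (H a)) as [y hy].
      destruct (constructive_indefinite_description _ (H a')) as [y' hy'].
      simpl in e; subst. eauto.
    + destruct (classic (forall y, exists x, A (x,y))) as [H'|H'].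
      * right. exists (fun y => proj1_sig (constructive_indefinite_description _ (H' y))).
        intros a a' e.
        destruct (constructive_indefinite_description _ (H' a)) as [y hy].
        destruct (constructive_indefinite_description _ (H' a')) as [y' hy'].
        simpl in e; subst. eauto.
      * exfalso. destruct (not_all_ex_not _ _ H) as [x0 Hx0]. destruct (not_all_ex_not _ _ H') as [y0 Hy0].
        apply (Hmax (fun p => A p \/ p = (x0,y0))).
        -- auto.
        -- intro s. apply Hx0. exists y0. apply s. right; reflexivity.
        -- split.
           ++ intros x y y' [h|h] [h'|h'].
              ** eauto.
              ** injection h'; intros; subst. exfalso; eauto.
              ** injection h; intros; subst. exfalso; eauto.
              ** injection h; injection h'; intros; subst; auto.
           ++ intros x x' y [h|h] [h'|h'].
              ** eauto.
              ** injection h'; intros; subst. exfalso; eauto.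
              ** injection h; intros; subst. exfalso; eauto.
              ** injection h; injection h'; intros; subst; auto.
Qed.

Lemma sig_inj {A} {P : A -> Prop} (u v : {x | P x}) : proj1_sig u = proj1_sig v -> u = v.
Proof. destruct u as [x hx], v as [y hy]; simpl; intro; subst. f_equal. apply proof_irrelevance. Qed.

Section Hess.
Variable K : Type.
Variable e : nat -> K.
Hypothesis he : forall a b, e a = e b -> a = b.

Definition Bof (S : K + ((K*K)*K) -> Prop) k := S (inl k).
Definition Rof (S : K + ((K*K)*K) -> Prop) p c := S (inr (p,c)).

Definition Qg (S : K + ((K*K)*K) -> Prop) : Prop :=
  (forall p c c', Rof S p c -> Rof S p c' -> c = c') /\
  (forall p p' c, Rof S p c -> Rof S p' c -> p = p') /\
  (forall a b, (exists c, Rof S (a,b) c) <-> (Bof S a /\ Bof S b)) /\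
  (forall p c, Rof S p c -> Bof S c) /\
  (forall n, Bof S (e n)).

Definition Pg S := (forall t, ~ S t) \/ Qg S.

Lemma Pg_chain : forall F : (K + ((K*K)*K) -> Prop) -> Prop, (forall X, F X -> Pg X) ->
     (forall X Y, F X -> F Y -> (forall t, X t -> Y t) \/ (forall t, Y t -> X t)) ->
     Pg (fun t => exists2 X, F X & X t).
Proof.
  intros F HF Hch.
  assert (two : forall X1 X2 t1 t2, F X1 -> X1 t1 -> F X2 -> X2 t2 ->
            exists X, F X /\ X t1 /\ X t2 /\ Qg X).
  { intros X1 X2 t1 t2 f1 x1 f2 x2.
    destruct (Hch X1 X2 f1 f2) as [s|s].
    - exists X2. split; [auto|split;[auto|split;[auto|]]].
      destruct (HF X2 f2) as [h|h]; [exfalso; eapply h; eauto|auto].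
    - exists X1. split; [auto|split;[auto|split;[auto|]]].
      destruct (HF X1 f1) as [h|h]; [exfalso; eapply h; eauto|auto]. }
  assert (one : forall X1 t1, F X1 -> X1 t1 -> Qg X1).
  { intros X1 t1 f1 x1. destruct (HF X1 f1) as [h|h]; [exfalso; eapply h; eauto|auto]. }
  destruct (classic (exists t, exists2 X, F X & X t)) as [[t0 [X0 f0 x0]]|Hn].
  2:{ left. intros t h. apply Hn. eauto. }
  right. unfold Qg, Rof, Bof. split; [|split; [|split; [|split]]].
  - intros p c c' [X1 f1 x1] [X2 f2 x2].
    destruct (two _ _ _ _ f1 x1 f2 x2) as [X [fX [a [b q]]]].
    apply (proj1 q p c c'); auto.
  - intros p p' c [X1 f1 x1] [X2 f2 x2].
    destruct (two _ _ _ _ f1 x1 f2 x2) as [X [fX [a [b q]]]].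
    apply (proj1 (proj2 q) p p' c); auto.
  - intros a b; split.
   + intros [c [X1 f1 x1]]. pose proof (one _ _ f1 x1) as q.
    destruct (proj1 (proj1 (proj2 (proj2 q)) a b) (ex_intro _ c x1)). split; exists X1; auto.
   + intros [[X1 f1 x1] [X2 f2 x2]].
    destruct (two _ _ _ _ f1 x1 f2 x2) as [X [fX [xa [xb q]]]].
    destruct (proj2 (proj1 (proj2 (proj2 q)) a b) (conj xa xb)) as [c hc].
    exists c. exists X; auto.
  - intros p c [X1 f1 x1]. pose proof (one _ _ f1 x1) as q.
    exists X1; auto. apply (proj1 (proj2 (proj2 (proj2 q))) p c x1).
  - intro n. exists X0; auto. apply (proj2 (proj2 (proj2 (proj2 (one _ _ f0 x0))))).
Qed.

Definition S0 (t : K + ((K*K)*K)) : Prop :=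
  match t with
  | inl k => exists n, e n = k
  | inr ((a,b),c) => exists i j, a = e i /\ b = e j /\ c = e (to_nat (i,j))
  end.

Lemma Q_S0 : Qg S0.
Proof.
  unfold Qg, Rof, Bof; simpl. split; [|split; [|split; [|split]]].
  - intros [a b] c c' [i [j [-> [-> ->]]]] [i' [j' [h1 [h2 ->]]]].
    apply he in h1; apply he in h2; subst; auto.
  - intros [a b] [a' b'] c [i [j [-> [-> ->]]]] [i' [j' [-> [-> h]]]].
    apply he in h. assert (E : (i,j) = (i',j')) by (rewrite <- (cancel_of_to (i,j)), <- (cancel_of_to (i',j')); f_equal; exact h). injection E; intros; subst; auto.
  - intros a b; split.
    + intros [c [i [j [-> [-> _]]]]]; eauto.
    + intros [[i <-] [j <-]]. exists (e (to_nat (i,j))). exists i, j. auto.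
  - intros [a b] c [i [j [_ [_ ->]]]]. eauto.
  - eauto.
Qed.

Section Max.
Variable M : K + ((K*K)*K) -> Prop.
Hypothesis QM : Qg M.
Hypothesis Mmax : forall B, (forall t, M t -> B t) -> ~ (forall t, B t -> M t) -> ~ Pg B.

Definition B' := {k | Bof M k}.

Lemma mu_ex : card_le (B' * B') B'.
Proof.
  destruct QM as [q1 [q2 [q3 [q4 q5]]]].
  assert (H : forall p : B'*B', exists c, Rof M (proj1_sig (fst p), proj1_sig (snd p)) c).
  { intros [[a ha] [b hb]]. apply q3. simpl; auto. }
  exists (fun p => exist (Bof M) (proj1_sig (constructive_indefinite_description _ (H p)))
            (q4 _ _ (proj2_sig (constructive_indefinite_description _ (H p))))).
  intros p p' E. apply (f_equal (@proj1_sig _ _)) in E. simpl in E.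
  destruct (constructive_indefinite_description _ (H p)) as [c hc].
  destruct (constructive_indefinite_description _ (H p')) as [c' hc'].
  simpl in E. subst c'. pose proof (q2 _ _ _ hc hc') as E.
  destruct p as [[a ha] [b hb]], p' as [[a' ha'] [b' hb']]. simpl in E.
  injection E; intros; subst. f_equal; apply sig_inj; reflexivity.
Qed.

Lemma bool_B' : card_le (B' * bool) B'.
Proof.
  destruct QM as [q1 [q2 [q3 [q4 q5]]]].
  eapply cle_trans; [|apply mu_ex]. apply cle_prod; [apply cle_refl|].
  exists (fun b : bool => if b then exist _ (e 0) (q5 0) else exist _ (e 1) (q5 1)).
  intros [|] [|] E; auto; apply (f_equal (@proj1_sig _ _)) in E; simpl in E; apply he in E; discriminate.
Qed.

Lemma K_le_B' : card_le K B'.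
Proof.
  destruct QM as [q1 [q2 [q3 [q4 q5]]]].
  apply NNPP; intro nKB.
  destruct (comparability {k | ~ Bof M k} B') as [[j hj]|[j hj]].
  - apply nKB. eapply cle_trans; [|apply bool_B'].
    exists (fun k => match excluded_middle_informative (Bof M k) with
                    | left h => (exist _ k h, true)
                    | right h => (j (exist _ k h), false) end).
    intros a b E.
    destruct (excluded_middle_informative (Bof M a)) as [ha|ha];
    destruct (excluded_middle_informative (Bof M b)) as [hb|hb]; injection E; intros; try discriminate.
    + assumption.
    + apply hj in H. apply (f_equal (@proj1_sig _ _)) in H. exact H.
  -
    pose (Cs := fun c => exists b (hb : Bof M b), proj1_sig (j (exist _ b hb)) = c).
    pose (B2 := fun k => Bof M k \/ Cs k).
    pose (D2 := fun p : K*K => B2 (fst p) /\ B2 (snd p) /\ ~ (Bof M (fst p) /\ Bof M (snd p))).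
    assert (hg : card_le {p | D2 p} B').
    { eapply cle_trans with (B := ({k | B2 k} * {k | B2 k})%type).
      { exists (fun p => (exist B2 (fst (proj1_sig p)) (proj1 (proj2_sig p)),
                   exist B2 (snd (proj1_sig p)) (proj1 (proj2 (proj2_sig p))))).
        intros [[a b] h] [[a' b'] h'] E. injection E; intros; subst; apply sig_inj; reflexivity. }
      eapply cle_trans; [|apply mu_ex]. apply cle_prod.
      - eapply cle_trans; [|apply bool_B'].
        assert (inv : forall k, ~ Bof M k -> B2 k -> exists b (hb : Bof M b), proj1_sig (j (exist _ b hb)) = k).
        { intros k nk [h|h]; [contradiction|exact h]. }
        exists (fun u : {k | B2 k} =>
          match excluded_middle_informative (Bof M (proj1_sig u)) with
          | left h => (exist _ (proj1_sig u) h, true)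
          | right h => let w := constructive_indefinite_description _ (inv _ h (proj2_sig u)) in
                       (exist _ (proj1_sig w) (proj1_sig (constructive_indefinite_description _ (proj2_sig w))), false)
          end).
        intros [a ha] [b hb]; simpl.
        destruct (excluded_middle_informative (Bof M a)) as [xa|xa];
        destruct (excluded_middle_informative (Bof M b)) as [xb|xb]; intro E; injection E; intros; try discriminate.
        + apply sig_inj; simpl; assumption.
        + apply sig_inj; simpl.
          destruct (constructive_indefinite_description _ (inv a xa ha)) as [w1 hw1].
          destruct (constructive_indefinite_description _ (inv b xb hb)) as [w2 hw2].
          simpl in *.
          destruct (constructive_indefinite_description _ hw1) as [p1 e1].
          destruct (constructive_indefinite_description _ hw2) as [p2 e2]. simpl in *.
          subst w2. rewrite <- e1, <- e2. f_equal. f_equal. f_equal. apply proof_irrelevance.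
      - eapply cle_trans; [|apply bool_B'].
        assert (inv : forall k, ~ Bof M k -> B2 k -> exists b (hb : Bof M b), proj1_sig (j (exist _ b hb)) = k).
        { intros k nk [h|h]; [contradiction|exact h]. }
        exists (fun u : {k | B2 k} =>
          match excluded_middle_informative (Bof M (proj1_sig u)) with
          | left h => (exist _ (proj1_sig u) h, true)
          | right h => let w := constructive_indefinite_description _ (inv _ h (proj2_sig u)) in
                       (exist _ (proj1_sig w) (proj1_sig (constructive_indefinite_description _ (proj2_sig w))), false)
          end).
        intros [a ha] [b hb]; simpl.
        destruct (excluded_middle_informative (Bof M a)) as [xa|xa];
        destruct (excluded_middle_informative (Bof M b)) as [xb|xb]; intro E; injection E; intros; try discriminate.
        + apply sig_inj; simpl; assumption.
        + apply sig_inj; simpl.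
          destruct (constructive_indefinite_description _ (inv a xa ha)) as [w1 hw1].
          destruct (constructive_indefinite_description _ (inv b xb hb)) as [w2 hw2].
          simpl in *.
          destruct (constructive_indefinite_description _ hw1) as [p1 e1].
          destruct (constructive_indefinite_description _ hw2) as [p2 e2]. simpl in *.
          subst w2. rewrite <- e1, <- e2. f_equal. f_equal. f_equal. apply proof_irrelevance. }
    destruct hg as [g hgi].
    pose (S2 := fun t => match t with
                | inl k => B2 k
                | inr (p,c) => Rof M p c \/ exists (h : D2 p), c = proj1_sig (j (g (exist _ p h)))
                end).
    apply (Mmax S2).
    + intros [k|[p c]] h; simpl; [left; exact h | left; exact h].
    + intro s. assert (hb : Bof M (e 0)) by apply q5.
      pose proof (s (inl (proj1_sig (j (exist _ (e 0) hb))))) as s1.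
      apply (proj2_sig (j (exist _ (e 0) hb))). apply s1. simpl. right. exists (e 0), hb. reflexivity.
    + right. unfold Qg, Rof, Bof; simpl. split; [|split; [|split; [|split]]].
      * intros p c c' [h|[h1 ->]] [h'|[h2 ->]].
        -- eapply q1; eauto.
        -- exfalso. destruct p as [a b]. apply (proj2 (proj2 h2)). apply (proj1 (q3 a b)). eauto.
        -- exfalso. destruct p as [a b]. apply (proj2 (proj2 h1)). apply (proj1 (q3 a b)). eauto.
        -- assert (h1 = h2) by apply proof_irrelevance. subst; reflexivity.
      * intros p p' c [h|[h1 ->]] [h'|[h2 E]].
        -- eapply q2; eauto.
        -- exfalso. apply (proj2_sig (j (g (exist _ p' h2)))). rewrite <- E. eapply q4; eauto.
        -- exfalso. apply (proj2_sig (j (g (exist _ p h1)))). eapply q4; eauto.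
        -- apply sig_inj in E. apply hj in E. apply hgi in E.
           apply (f_equal (@proj1_sig _ _)) in E. simpl in E. auto.
      * intros a b; split.
       { intros [c [h|[h _]]].
        -- destruct (proj1 (q3 a b) (ex_intro _ c h)). split; left; auto.
        -- exact (conj (proj1 h) (proj1 (proj2 h))). }
        intros [ha hb]. destruct (classic (Bof M a /\ Bof M b)) as [hab|hab].
        -- destruct (proj2 (q3 a b) hab) as [c hc]. exists c. left; exact hc.
        -- assert (h : D2 (a,b)) by (split; [auto|split; auto]).
           exists (proj1_sig (j (g (exist _ (a,b) h)))). right. exists h. reflexivity.
      * intros p c [h|[h ->]].
        -- left. eapply q4; eauto.
        -- right. exists (proj1_sig (g (exist _ p h))), (proj2_sig (g (exist _ p h))).
           f_equal. f_equal. apply sig_inj; reflexivity.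
      * intro n. left. apply q5.
Qed.

End Max.

Lemma hess_aux : card_le (K*K) K.
Proof.
  destruct (zorn_sets _ Pg Pg_chain) as [M [PM Mmax]].
  destruct PM as [Em|QM].
  - exfalso. apply (Mmax S0).
    + intros t h; exfalso; exact (Em t h).
    + intro s. apply (Em (inl (e 0))). apply s. simpl. eauto.
    + right. apply Q_S0.
  - pose proof (K_le_B' M QM Mmax) as hKB.
    eapply cle_trans. apply (cle_prod _ _ _ _ hKB hKB).
    eapply cle_trans. apply (mu_ex M QM).
    exists (@proj1_sig _ _). intros; apply sig_inj; auto.
Qed.
End Hess.

Lemma hessenberg K : card_le nat K -> card_le (K*K) K.
Proof. intros [e he]. apply (hess_aux K e he). Qed.

Set Default Proof Using "All".
Section Ord.
Variables (K O : Type) (lt : O -> O -> Prop).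
Hypotheses (Knat : card_le nat K) (wf : well_founded lt)
  (tr : forall a b c, lt a b -> lt b c -> lt a c)
  (tot : forall a b, lt a b \/ a = b \/ lt b a)
  (seg : forall a, card_le {b : O | lt b a} K) (notOK : ~ card_le O K).

Lemma lt_irr a : ~ lt a a.
Proof.
  induction (wf a) as [a _ IH]. intro h. exact (IH a h h).
Qed.

Lemma min_ex (P : O -> Prop) a : P a -> exists m, P m /\ forall b, P b -> ~ lt b m.
Proof.
  intro Pa. apply NNPP; intro H.
  assert (Hn : forall x, ~ P x).
  { intro x. induction (wf x) as [x _ IH]. intro Px. apply H. exists x. split; auto.
    intros b Pb lb. exact (IH b lb Pb). }
  exact (Hn a Pa).
Qed.

Lemma unb_inj (I : Type) (g : I -> O) : (forall b, exists i, ~ lt (g i) b) -> card_le O (I * option K).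
Proof.
  intro H.
  assert (segf : forall a, {j : {b : O | lt b a} -> K | forall u v, j u = j v -> u = v}).
  { intro a. apply constructive_indefinite_description. apply seg. }
  pose (ib := fun b => proj1_sig (constructive_indefinite_description _ (H b))).
  pose (code := fun i b => match excluded_middle_informative (lt b (g i)) with
                          | left h => Some (proj1_sig (segf _) (exist _ b h))
                          | right _ => None end).
  assert (code_inj : forall i b c, ~ lt (g i) b -> ~ lt (g i) c -> code i b = code i c -> b = c).
  { intros i b c sb sc. unfold code.
    destruct (excluded_middle_informative (lt b (g i))) as [hb|hb];
    destruct (excluded_middle_informative (lt c (g i))) as [hc|hc]; intros E2; try discriminate.
    - injection E2; intro E3.
      apply (proj2_sig (segf _)) in E3. apply (f_equal (@proj1_sig _ _)) in E3. exact E3.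
    - destruct (tot b (g i)) as [h|[h|h]]; [contradiction| |contradiction].
      destruct (tot c (g i)) as [h'|[h'|h']]; [contradiction| |contradiction]. congruence. }
  assert (spec : forall b, ~ lt (g (ib b)) b).
  { intro b. unfold ib. destruct (constructive_indefinite_description _ (H b)); auto. }
  exists (fun b => (ib b, code (ib b) b)).
  intros b c E. injection E; intros E2 E1.
  rewrite <- E1 in E2. apply (code_inj (ib b)); auto. rewrite E1; auto.
Qed.

Lemma bounded (I : Type) : ~ card_le O I -> forall g : I -> O, exists b, forall i, lt (g i) b.
Proof.
  intros nOI g. apply NNPP; intro H.
  assert (H' : forall b, exists i, ~ lt (g i) b).
  { intro b. apply NNPP; intro H2. apply H. exists b. intro i. apply NNPP; intro H3. apply H2. eauto. }
  pose proof (unb_inj I g H') as hO.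
  destruct (comparability I K) as [hIK|hKI].
  - apply notOK. eapply cle_trans; [exact hO|].
    eapply cle_trans; [|apply (hessenberg K Knat)].
    apply cle_prod; [exact hIK| apply cle_option; exact Knat].
  - apply nOI. eapply cle_trans; [exact hO|].
    eapply cle_trans; [|apply (hessenberg I (cle_trans _ _ _ Knat hKI))].
    apply cle_prod; [apply cle_refl|]. eapply cle_trans; [apply cle_option; exact Knat|exact hKI].
Qed.

Lemma notOnat : ~ card_le O nat.
Proof. intro h. apply notOK. eapply cle_trans; eauto. Qed.

Lemma big_tail b : card_le O {c : O | ~ lt c b}.
Proof.
  apply NNPP; intro H.
  destruct (bounded _ H (@proj1_sig _ _)) as [b' hb'].
  destruct (tot b b') as [h|[h|h]].
  - assert (nb : ~ lt b' b) by (intro h'; exact (lt_irr b (tr _ _ _ h h'))).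
    exact (lt_irr b' (hb' (exist _ b' nb))).
  - subst. exact (lt_irr b' (hb' (exist _ b' (lt_irr b')))).
  - exact (lt_irr b (tr _ _ _ (hb' (exist _ b (lt_irr b))) h)).
Qed.

End Ord.

Theorem lemma4 (P : property)
  (Hnec : forall (V' : Type) (E' : V' -> V' -> Prop) (f' : V' -> Type),
      in_C V' E' f' -> has_perfect_factor V' E' f' -> P V' E' f')
  (K : Type) (O : Type) (lt : O -> O -> Prop) (HO : is_succ_card K O lt)
  (V : Type) (E : V -> V -> Prop) (f : V -> Type)
  (HC : in_C V E f) (HV : card_eq V O)
  (Hf : has_perfect_factor V E f) :
  ~ P_destructed P V E f O lt.
Proof.
  destruct HO as [Knat [wf [tr [tot [seg notOK]]]]].
  intros [A [[mono [cont [small cover]]] stat]].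
  destruct Hf as [F [FE [Fsym Fdeg]]].
  destruct HC as [[Vinh [Esym Eirr]] fle].
  assert (smallA : forall a, ~ card_le O {x | A a x}).
  { intro a. exact (proj2 (small a)). }
  assert (OV : card_le O V) by (apply ceq_cle_rev; exact HV).
  assert (VO : card_le V O) by (apply ceq_cle; exact HV).
  pose (Cl := fun a => forall x y, A a x -> ~ card_eq (f x) O -> F x y -> A a y).
  assert (le_mono : forall a b x, (lt a b \/ a = b) -> A a x -> A b x).
  { intros a b x [h|<-] hx; eauto. }
  assert (stx : forall y, {s : O | A s y}).
  { intro y. apply constructive_indefinite_description. apply cover. }
  pose (st := fun y => proj1_sig (stx y)).
  assert (Ast : forall y, A (st y) y) by (intro y; exact (proj2_sig (stx y))).
  assert (degsmall : forall x, ~ card_eq (f x) O -> ~ card_le O (deg F x)).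
  { intros x nx hO. apply nx. apply SB.
    - eapply cle_trans; [apply fle|]. eapply cle_trans; [|exact VO].
      exists (@proj1_sig _ _). intros; apply sig_inj; auto.
    - eapply cle_trans; [exact hO|]. apply ceq_cle. apply Fdeg. }
  assert (step : forall a, exists b, (lt a b \/ a = b) /\
            forall x y, A a x -> ~ card_eq (f x) O -> F x y -> A b y).
  { intro a.
    assert (hx : forall x : {x | A a x}, exists be, ~ card_eq (f (proj1_sig x)) O ->
                   forall y, F (proj1_sig x) y -> lt (st y) be).
    { intros [x ax]. simpl. destruct (classic (card_eq (f x) O)) as [c|c].
      - exists a. intro; contradiction.
      - destruct (bounded K O lt Knat wf tr tot seg notOK _ (degsmall x c)
                   (fun p : deg F x => st (proj1_sig p))) as [be hbe].
        exists be. intros _ y Fy. exact (hbe (exist _ y Fy)). }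
    destruct (bounded K O lt Knat wf tr tot seg notOK _ (smallA a)
               (fun x => proj1_sig (constructive_indefinite_description _ (hx x)))) as [ga hga].
    destruct (tot a ga) as [h|[h|h]].
    - exists ga. split; [left; exact h|].
      intros x y ax cx Fy.
      pose proof (hga (exist _ x ax)) as h1.
      destruct (constructive_indefinite_description _ (hx (exist _ x ax))) as [be hbe]. simpl in *.
      apply (mono (st y)); [|apply Ast]. eapply tr; [apply (hbe cx y Fy)|exact h1].
    - exists a. split; [right; reflexivity|].
      intros x y ax cx Fy.
      pose proof (hga (exist _ x ax)) as h1.
      destruct (constructive_indefinite_description _ (hx (exist _ x ax))) as [be hbe]. simpl in *.
      apply (mono (st y)); [|apply Ast]. subst ga. eapply tr; [apply (hbe cx y Fy)|exact h1].
    - exists a. split; [right; reflexivity|].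
      intros x y ax cx Fy.
      pose proof (hga (exist _ x ax)) as h1.
      destruct (constructive_indefinite_description _ (hx (exist _ x ax))) as [be hbe]. simpl in *.
      apply (mono (st y)); [|apply Ast]. eapply tr; [apply (hbe cx y Fy)|]. eapply tr; [exact h1|exact h]. }
  pose (s := fun a => proj1_sig (constructive_indefinite_description _ (step a))).
  assert (hs : forall a, (lt a (s a) \/ a = s a) /\
            forall x y, A a x -> ~ card_eq (f x) O -> F x y -> A (s a) y).
  { intro a. unfold s. destruct (constructive_indefinite_description _ (step a)); auto. }
  assert (club_Cl : club lt Cl).
  { split.
    - intro a0.
      pose (u := fix u n := match n with 0 => a0 | S n => s (u n) end).
      destruct (bounded K O lt Knat wf tr tot seg notOK nat (notOnat K O lt Knat wf tr tot seg notOK) u) as [bb hbb].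
      destruct (min_ex K O lt Knat wf tr tot seg notOK (fun be => forall n, lt (u n) be \/ u n = be) bb) as [l [Ul lmin]].
      { intro n; left; auto. }
      exists l. split; [|exact (Ul 0)].
      assert (below : forall c, lt c l -> exists n, lt c (u n)).
      { intros c hc. apply NNPP; intro H. apply (lmin c); auto. intro n.
        destruct (tot (u n) c) as [h|[h|h]]; auto. exfalso; eauto. }
      intros x y ax cx Fy.
      destruct (classic (exists n, u n = l)) as [[n hn]|hn].
      + assert (hSn : u (S n) = l).
        { destruct (Ul (S n)) as [h|h]; auto. simpl in h |- *. rewrite hn in h |- *.
          destruct (proj1 (hs l)) as [h'|h']; [|congruence]. exfalso. exact (lt_irr K O lt Knat wf tr tot seg notOK l (tr _ _ _ h' h)). }
        rewrite <- hSn. simpl. apply (proj2 (hs (u n)) x y); auto. rewrite hn; auto.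
      + assert (ltu : forall n, lt (u n) l).
        { intro n. destruct (Ul n); auto. exfalso; eauto. }
        assert (lim : is_limit lt l).
        { split; [exists (u 0); auto|]. intros c hc. destruct (below c hc) as [n hn']. eauto. }
        destruct (proj1 (cont l lim x) ax) as [c [hc acx]].
        destruct (below c hc) as [n hn'].
        apply (mono (u (S n))); [apply ltu|].
        simpl. apply (proj2 (hs (u n)) x y); auto. apply (mono c); auto.
    - intros l lim hcof x y ax cx Fy.
      destruct (proj1 (cont l lim x) ax) as [c [hc acx]].
      destruct (hcof c hc) as [b [Cb [cb bl]]].
      apply (mono b); auto. apply (Cb x); auto. eapply le_mono; eauto. }
  destruct (stat Cl club_Cl) as [a [Sa Ca]].
  apply Sa. clear Sa.
  pose (W := Vt_al f A a).
  pose (Fa := fun u v : W => F (proj1_sig u) (proj1_sig v) /\ (~ A a (proj1_sig u) \/ ~ A a (proj1_sig v))).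
  assert (pf3 : forall u : W, card_eq (deg Fa u) (f_al f A a u)).
  { intros [x hx]. unfold f_al; simpl.
    pose (gm := fun p : deg Fa (exist _ x hx) => exist (fun y => F x y) (proj1_sig (proj1_sig p)) (proj1 (proj2_sig p))).
    assert (gmi : forall p q, gm p = gm q -> p = q).
    { intros p q e. apply (f_equal (@proj1_sig _ _)) in e. simpl in e. apply sig_inj. apply sig_inj. exact e. }
    apply (ceq_trans _ (deg F x)); [|apply Fdeg].
    destruct (classic (A a x)) as [ax|nax].
    - assert (hfx : card_eq (f x) O) by (destruct hx as [h|h]; [contradiction|exact h]).
      apply SB; [exists gm; exact gmi|].
      pose proof (ceq_trans _ _ _ (Fdeg x) hfx) as NO.
      pose proof (ceq_cle _ _ NO) as ON.
      destruct NO as [psi [psii psis]].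
      pose (chi := fun b => proj1_sig (constructive_indefinite_description _ (psis b))).
      assert (chis : forall b, psi (chi b) = b).
      { intro b. unfold chi. destruct (constructive_indefinite_description _ (psis b)); auto. }
      assert (nM : ~ card_le O {p : deg F x | A a (proj1_sig p)}).
      { intro h. apply (smallA a). eapply cle_trans; [exact h|].
        exists (fun m => exist (fun z => A a z) (proj1_sig (proj1_sig m)) (proj2_sig m)).
        intros m m' e. apply (f_equal (@proj1_sig _ _)) in e. simpl in e.
        apply sig_inj. apply sig_inj. exact e. }
      destruct (bounded K O lt Knat wf tr tot seg notOK _ nM (fun m => psi (proj1_sig m))) as [be hbe].
      eapply cle_trans; [exact ON|].
      eapply cle_trans; [apply (big_tail K O lt Knat wf tr tot seg notOK be)|].
      assert (nA : forall t : {c | ~ lt c be}, ~ A a (proj1_sig (chi (proj1_sig t)))).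
      { intros t h. apply (proj2_sig t). rewrite <- (chis (proj1_sig t)).
        exact (hbe (exist _ (chi (proj1_sig t)) h)). }
      exists (fun t : {c | ~ lt c be} =>
         exist (fun v : W => Fa (exist _ x hx) v)
           (exist (V_al f A a) (proj1_sig (chi (proj1_sig t))) (or_introl (nA t)))
           (conj (proj2_sig (chi (proj1_sig t))) (or_intror (nA t)))).
      intros t t' e. apply (f_equal (@proj1_sig _ _)) in e. apply (f_equal (@proj1_sig _ _)) in e.
      simpl in e. apply sig_inj in e. apply (f_equal psi) in e. rewrite !chis in e.
      apply sig_inj; exact e.
    - exists gm. split; [exact gmi|].
      intros [y Fy].
      assert (vy : V_al f A a y).
      { destruct (classic (A a y)) as [ay|nay]; [right|left; exact nay].
        apply NNPP; intro nc. apply nax. exact (Ca y x ay nc (Fsym _ _ Fy)). }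
      exists (exist (fun v : W => Fa (exist _ x hx) v) (exist _ y vy) (conj Fy (or_introl nax))).
      apply sig_inj; reflexivity. }
  assert (pf : perfect_factor W (E_al E f A a) (f_al f A a) Fa).
  { split; [|split].
    - intros u v [Fuv h]. split; [apply FE; exact Fuv|].
      destruct h as [h|h].
      + right. split; [exact (proj2_sig v)|exact h].
      + left. split; [exact (proj2_sig u)|exact h].
    - intros u v [Fuv h]. split; [apply Fsym; exact Fuv|tauto].
    - exact pf3. }
  assert (inC : in_C W (E_al E f A a) (f_al f A a)).
  { split; [split; [|split]|].
    - apply NNPP; intro H. apply (smallA a). eapply cle_trans; [exact OV|].
      exists (fun x => exist (fun x => A a x) x (NNPP _ (fun h => H (inhabits (exist _ x (or_introl h)))))).
      intros x x' e. apply (f_equal (@proj1_sig _ _)) in e. exact e.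
    - intros u v [Euv h]. split; [apply Esym; exact Euv|tauto].
    - intros u [Euu _]. exact (Eirr _ Euu).
    - intro u. eapply cle_trans; [apply ceq_cle_rev; apply pf3|].
      exists (fun p : deg Fa u => exist _ (proj1_sig p) (proj1 pf u (proj1_sig p) (proj2_sig p))).
      intros p q e. apply (f_equal (@proj1_sig _ _)) in e. apply sig_inj; exact e. }
  split; [exact inC|]. apply Hnec; [exact inC|]. exists Fa; exact pf.
Qed.
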